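(* Let $G$ be a finite abelian group, let $G_1,\dots,G_n,H$ be subgroups of $G$, and fix a character $\chi$ on $G$. Let $K=\bigcap_{i=1}^nG_i$. Then the number of tuples $(\chi_1,\dots,\chi_n)\in\widehat{G}^n$ such that $\chi_i(g)=1$ for all $g\in G_i$ and all $1\le i\le n$, and $\bigl(\prod_{i=1}^n\chi_i\bigr)(h)=\chi(h)$ for all $h\in H$, equals \[ \frac{|H\cap K|}{|H|}\cdot\prod_{i=1}^n\frac{|G|}{|G_i|}\cdot\llbracket\chi(H\cap K)=1\rrbracket. \]
   Context: $\widehat{G}$ is the group of characters (homomorphisms to the complex unit circle) of $G$. $\llbracket P\rrbracket$ is $1$ if $P$ holds and $0$ otherwise; $\chi(H\cap K)=1$ means $\chi$ is trivial on $H\cap K$. *)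

(* Defs.v *)
From HB Require Import structures.
From mathcomp Require Import all_boot all_order all_algebra all_fingroup all_solvable all_field all_character.
Set Implicit Arguments. Unset Strict Implicit. Unset Printing Implicit Defensive.
Import Order.TTheory GRing.Theory Num.Theory.
Local Open Scope ring_scope.
Local Open Scope group_scope.

(* Characters of G (homomorphisms G -> unit circle) are the linear characters
   'chi_i (i : Iirr G, 'chi_i \is a linear_char) of G.  A tuple of characters
   is a finite function t : 'I_n -> Iirr G. *)
Definition char_tuples (gT : finGroupType) (G : {group gT}) (n : nat)
    (Gs : 'I_n -> {group gT}) (H : {group gT}) (chi : 'CF(G)) :
    {set {ffun 'I_n -> Iirr G}} :=
  [set t : {ffun 'I_n -> Iirr G} |
     [forall i, 'chi_(t i) \is a linear_char]
  && [forall i, forall g in Gs i, 'chi_(t i) g == 1%R]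
  && [forall h in H, ((\prod_(i < n) 'chi_(t i)) h == chi h)%R]].

(* Main.v *)
Require Import Defs.
From HB Require Import structures.
From mathcomp Require Import all_boot all_order all_algebra all_fingroup all_solvable all_field all_character.
Import Order.TTheory GRing.Theory Num.Theory.
Local Open Scope ring_scope.
Lemma sum_mult (gT : finGroupType) (N : {group gT}) (f : gT -> algC)
  (fM : {in N &, forall x y, f (x * y)%g = f x * f y}) :
  \sum_(g in N) f g = #|N|%:R * ([forall g in N, f g == 1])%:R.
Proof.
case: (boolP [forall g in N, f g == 1]) => [/forall_inP f1|].
  by rewrite mulr1 -sumr_const; apply: eq_bigr => g /f1 /eqP.
move/forall_inPn => [g0 g0N /negPf f0].
rewrite mulr0.
set S := \sum_(g in N) f g.
have e1 : \sum_(g in N) f (g0 * g)%g = f g0 * S.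
  by rewrite /S big_distrr /=; apply: eq_bigr => g gN; rewrite fM.
have eS : S = f g0 * S.
  rewrite -e1 /S (reindex_inj (mulgI g0)) /=.
  by apply: eq_bigl => g; rewrite groupMl.
have : (1 - f g0) * S = 0 by rewrite mulrBl mul1r -eS subrr.
move/eqP; rewrite mulf_eq0 subr_eq0 eq_sym f0 /= => /eqP //.
Qed.

Lemma sum_irr_abelian (gT : finGroupType) (G : {group gT}) (abG : abelian G) x :
  \sum_(j : Iirr G) 'chi[G]_j x = (#|G| * (x == 1%g))%:R.
Proof.
case xG: (x \in G); last first.
  rewrite big1 => [|j _]; last by rewrite cfun0 ?xG.
  have /negPf -> : x != 1%g by apply: contraFneq xG => ->; exact: group1.
  by rewrite muln0.
have := second_orthogonality_relation x (group1 G).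
rewrite class1G inE (eq_bigr (fun j => 'chi[G]_j x)) => [->|j _].
  case: eqP => [->|_]; last by rewrite muln0.
  by rewrite cent11T setIT muln1.
by rewrite lin_char1 ?conjC1 ?mulr1 //; apply/char_abelianP.
Qed.

Lemma sum_triv (gT : finGroupType) (G : {group gT}) (abG : abelian G)
  (N : {group gT}) (sNG : N \subset G) x (xG : x \in G) :
  \sum_(j : Iirr G) ([forall g in N, 'chi[G]_j g == 1])%:R * 'chi_j x
    = (#|G|%:R / #|N|%:R) * (x \in N)%:R.
Proof.
have /char_abelianP lin := abG.
have e j : ([forall g in N, 'chi[G]_j g == 1])%:R
    = #|N|%:R^-1 * \sum_(g in N) 'chi[G]_j g.
  rewrite (@sum_mult _ N) ?mulKf ?neq0CG // => a b aN bN.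
  by rewrite lin_charM // (subsetP sNG).
transitivity (#|N|%:R^-1 * \sum_(g in N) \sum_(j : Iirr G) 'chi[G]_j (g * x)%g).
  rewrite exchange_big big_distrr /=; apply: eq_bigr => j _.
  rewrite e -mulrA mulr_suml; congr (_ * _); apply: eq_bigr => g gN.
  by rewrite lin_charM // (subsetP sNG).
rewrite (eq_bigr (fun g => #|G|%:R * (g == x^-1)%g%:R)) => [|g _]; last first.
  by rewrite sum_irr_abelian // natrM mulg_eq1.
rewrite -big_distrr /= mulrCA mulrA.
congr (_ * _).
case xN: (x \in N).
  rewrite (bigD1 (x^-1)%g) ?groupV //= eqxx big1 ?addr0 // => g /andP [_ /negPf ->] //.
by rewrite big1 // => g gN; case: eqP => // eg; rewrite -groupV -eg gN in xN.
Qed.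

Lemma prod_bool (I : finType) (P : pred I) :
  \prod_i (P i)%:R = ([forall i, P i])%:R :> algC.
Proof.
case: (boolP [forall i, P i]) => [/forallP h|/forallPn [i /negPf Pi]].
  by rewrite big1 // => i _; rewrite h.
by rewrite (bigD1 i) //= Pi mul0r.
Qed.

Lemma cf_prodE (gT : finGroupType) (G : {group gT}) (I : finType) (F : I -> 'CF(G)) x :
  x \in G -> (\prod_i F i) x = \prod_i F i x.
Proof.
move=> xG; elim/big_rec2: _ => [|i a phi _ <-]; first by rewrite cfun1E xG.
by rewrite cfunE.
Qed.

Theorem lemma6p10 (gT : finGroupType) (G : {group gT}) (n : nat)
    (Gs : 'I_n -> {group gT}) (H : {group gT}) (chi : 'CF(G))
    (abG : abelian G) (sGsG : forall i, Gs i \subset G) (sHG : H \subset G)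
    (lin_chi : chi \is a linear_char) :
  let K := (\bigcap_(i < n) Gs i)%g in
  (#|char_tuples Gs H chi|)%:R =
    (#|(H :&: K)%g|)%:R / (#|H|)%:R
    * \prod_(i < n) ((#|G|)%:R / (#|Gs i|)%:R)
    * (if [forall h in (H :&: K)%g, chi h == 1] then 1 else 0) :> algC.
Proof.
move=> K.
have /char_abelianP lin := abG.
set T := fun i (j : Iirr G) => ([forall g in Gs i, 'chi[G]_j g == 1])%:R : algC.
have HG h : h \in H -> h \in G by move/(subsetP sHG).
have step1 : (#|char_tuples Gs H chi|)%:R =
   \sum_(t : {ffun 'I_n -> Iirr G}) (\prod_i T i (t i)) *
      ([forall h in H, (\prod_i 'chi_(t i)) h == chi h])%:R.
  rewrite -sum1_card natr_sum big_mkcond /=; apply: eq_bigr => t _.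
  rewrite inE.
  have -> : [forall i, 'chi_(t i) \is a linear_char] by apply/forallP.
  rewrite /T prod_bool /=.
  set A := [forall i, _]; set B := [forall h in H, _].
  by clearbody A B; case: A; case: B; rewrite /= ?mulr1 ?mul0r ?mulr0.
have step2 (t : {ffun 'I_n -> Iirr G}) : ([forall h in H, (\prod_i 'chi_(t i)) h == chi h])%:R
   = #|H|%:R^-1 * \sum_(h in H) (\prod_i 'chi[G]_(t i) h) / chi h.
  rewrite (@sum_mult _ H) ?mulKf ?neq0CG //; last first.
    move=> a b aH bH; rewrite lin_charM ?HG // invfM.
    rewrite (eq_bigr (fun i => 'chi[G]_(t i) a * 'chi[G]_(t i) b)) => [|i _]; last first.
      by rewrite lin_charM ?HG.
    by rewrite big_split /= mulrACA.
  do 2 f_equal; apply: eq_forallb_in => h hH.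
  rewrite cf_prodE ?HG //.
  have nz := lin_char_neq0 lin_chi (HG h hH).
  by rewrite -[RHS](inj_eq (mulIf nz)) divfK // mul1r.
rewrite step1.
under eq_bigr do rewrite step2.
transitivity (#|H|%:R^-1 * \sum_(h in H) (chi h)^-1 *
   \prod_(i < n) \sum_(j : Iirr G) T i j * 'chi[G]_j h).
  transitivity (\sum_(t : {ffun 'I_n -> Iirr G}) \sum_(h in H)
     #|H|%:R^-1 * ((\prod_i T i (t i)) * ((\prod_i 'chi[G]_(t i) h) / chi h))).
    by apply: eq_bigr => t _; rewrite mulrCA !big_distrr.
  rewrite exchange_big big_distrr /=; apply: eq_bigr => h _.
  rewrite bigA_distr_bigA big_distrr /= big_distrr /=; apply: eq_bigr => t _.
  rewrite big_split /=.
  by congr (_ * _); rewrite mulrA mulrC.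
rewrite (eq_bigr (fun h => (chi h)^-1 * (\prod_(i < n) (#|G|%:R / #|Gs i|%:R) * (h \in K)%:R)))
   => [|h hH]; last first.
  congr (_ * _).
  rewrite (eq_bigr (fun i => #|G|%:R / #|Gs i|%:R * (h \in Gs i)%:R)) => [|i _]; last first.
    by rewrite sum_triv ?HG.
  rewrite big_split /= prod_bool.
  have -> : [forall i, h \in Gs i] = (h \in K).
    by apply/forallP/bigcapP => [hi i _|hi i]; exact: hi.
  by [].
transitivity (#|H|%:R^-1 * (\prod_(i < n) (#|G|%:R / #|Gs i|%:R) *
   \sum_(h in (H :&: K)%g) (chi h)^-1)).
  congr (_ * _); rewrite big_distrr /= [RHS]big_mkcond [LHS]big_mkcond /=.
  apply: eq_bigr => h _; rewrite inE.
  by case: (h \in H); case: (h \in K); rewrite /= ?mulr1 ?mulr0 // mulrC.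
rewrite (@sum_mult _ (H :&: K)%G (fun h => (chi h)^-1)); last first.
  move=> a b /setIP [aH _] /setIP [bH _].
  by rewrite lin_charM ?HG // invfM.
have -> : [forall h in (H :&: K)%G, (chi h)^-1 == 1] = [forall h in (H :&: K)%g, chi h == 1].
  by apply: eq_forallb_in => h _; rewrite invr_eq1.
set b := [forall h in _, _]; clearbody b.
rewrite [_ / _]mulrC -!mulrA; congr (_ * _); rewrite mulrCA.
by case: b.
Qed.
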